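(* Let $A$ be a nonempty finite poset. Suppose that for every $n\ge0$, every poset $X$, and every pushout square in $\mathbf{Pos}$ $$\begin{array}{ccc}\Pi\mathrm{Sd}^2\partial\Delta[n]&\to&X\\ \downarrow&&\downarrow\\ \Pi\mathrm{Sd}^2\Delta[n]&\to&Y\end{array}$$ (with left map induced by the boundary inclusion), if $A$ is a retract of $Y$ then $A$ is a retract of $X$. Then $A$ is not cofibrant in the model structure on $\mathbf{Pos}$.
   Context: $\Pi\mathrm{Sd}^2\Delta[n]$ is the poset whose elements are chains $S_0\subsetneq\cdots\subsetneq S_k$ of nonempty subsets of $\{0,\dots,n\}$, ordered by inclusion of chains (viewed as sets of subsets); $\Pi\mathrm{Sd}^2\partial\Delta[n]$ is the subposet of chains with $S_k\neq\{0,\dots,n\}$. The model structure on $\mathbf{Pos}$: a map $f$ is a weak equivalence/fibration iff it is so as a functor in the Thomason model structure on $\mathbf{Cat}$ (i.e. $\mathrm{Ex}^2N f$ is a weak equivalence/fibration of simplicial sets); it is compactly generated with generating cofibrations the inclusions $\Pi\mathrm{Sd}^2\partial\Delta[n]\to\Pi\mathrm{Sd}^2\Delta[n]$. An object $A$ is a retract of $Y$ if there are maps $A\to Y\to A$ composing to $\mathrm{id}_A$. *)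

(* Defs.v *)
From mathcomp Require Import all_boot.
From Stdlib Require List.
Set Implicit Arguments. Unset Strict Implicit. Unset Printing Implicit Defensive.

Record Poset := {
  carrier :> Type;
  ple : carrier -> carrier -> Prop;
  ple_refl : forall x, ple x x;
  ple_antisym : forall x y, ple x y -> ple y x -> x = y;
  ple_trans : forall x y z, ple x y -> ple y z -> ple x z }.

Record Mono (P Q : Poset) := {
  mfun :> P -> Q;
  mmono : forall x y, ple x y -> ple (mfun x) (mfun y) }.

Definition mcomp (P Q R : Poset) (g : Mono Q R) (f : Mono P Q) : Mono P R.
Proof.
  refine {| mfun := fun x => g (f x) |}.
  by move=> x y h; apply: mmono; apply: mmono.
Defined.

Definition mid (P : Poset) : Mono P P.
Proof. by refine {| mfun := fun x => x |}. Defined.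

Definition meq (P Q : Poset) (f g : Mono P Q) : Prop := forall x, f x = g x.

(* Pushout square in Pos:   P --f--> X
                            |i       |g
                            v        v
                            Q --j--> Y      *)
Definition is_pushout (P X Q Y : Poset) (i : Mono P Q) (f : Mono P X)
  (j : Mono Q Y) (g : Mono X Y) : Prop :=
  meq (mcomp g f) (mcomp j i) /\
  forall (Z : Poset) (a : Mono X Z) (b : Mono Q Z),
    meq (mcomp a f) (mcomp b i) ->
    exists u : Mono Y Z,
      meq (mcomp u g) a /\ meq (mcomp u j) b /\
      forall u' : Mono Y Z, meq (mcomp u' g) a -> meq (mcomp u' j) b -> meq u' u.

Definition retract_of (A Y : Poset) : Prop :=
  exists (s : Mono A Y) (r : Mono Y A), meq (mcomp r s) (mid A).

Definition finite_poset (A : Poset) : Prop :=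
  exists l : List.list A, forall x : A, List.In x l.

(* A chain S_0 < ... < S_k of nonempty subsets of {0..n} is the same as a
   nonempty set of nonempty subsets of 'I_n.+1 totally ordered by inclusion. *)
Definition is_chain n (c : {set {set 'I_n.+1}}) : bool :=
  [&& c != set0, set0 \notin c &
      [forall S in c, forall T in c, (S \subset T) || (T \subset S)]].

(* boundary: top element S_k is not the full set, i.e. setT is not in c *)
Definition is_bd_chain n (c : {set {set 'I_n.+1}}) : bool :=
  is_chain c && (setT \notin c).

Definition chain_poset (n : nat) (pr : {set {set 'I_n.+1}} -> bool) : Poset.
Proof.
  refine {| carrier := {c : {set {set 'I_n.+1}} | pr c};
            ple := fun c d => (val c \subset val d) |}.
  - by move=> x; exact: subxx.
  - move=> x y h1 h2; apply: val_inj; apply/eqP; rewrite eqEsubset; apply/andP; by split.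
  - by move=> x y z h1 h2; exact: subset_trans h1 h2.
Defined.

Definition PiSd2Delta (n : nat) : Poset := @chain_poset n (@is_chain n).
Definition PiSd2bdDelta (n : nat) : Poset := @chain_poset n (@is_bd_chain n).

Definition bd_incl (n : nat) : Mono (PiSd2bdDelta n) (PiSd2Delta n).
Proof.
  refine {| mfun := fun c : PiSd2bdDelta n =>
              (exist _ (val c) (proj1 (andP (valP c))) : PiSd2Delta n) |}.
  by move=> x y h.
Defined.

(* Trivial fibrations of the compactly generated model structure = maps with
   the right lifting property against the generating cofibrations bd_incl n. *)
Definition trivial_fibration (E B : Poset) (p : Mono E B) : Prop :=
  forall n (a : Mono (PiSd2bdDelta n) E) (b : Mono (PiSd2Delta n) B),
    meq (mcomp p a) (mcomp b (bd_incl n)) ->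
    exists h : Mono (PiSd2Delta n) E,
      meq (mcomp h (bd_incl n)) a /\ meq (mcomp p h) b.

(* A is cofibrant iff (empty -> A) has the LLP against all trivial fibrations;
   since maps out of the empty poset are unique this means: every map A -> B
   lifts along every trivial fibration E -> B. *)
Definition cofibrant (A : Poset) : Prop :=
  forall (E B : Poset) (p : Mono E B), trivial_fibration p ->
    forall b : Mono A B, exists h : Mono A E, meq (mcomp p h) b.

(* Main.v *)
Require Import Defs.
From mathcomp Require Import all_boot.
From Stdlib Require Import ClassicalEpsilon ProofIrrelevance Eqdep_dec PeanoNat.
From Stdlib Require List.
From Stdlib Require Import Lia.
Set Implicit Arguments. Unset Strict Implicit. Unset Printing Implicit Defensive.

Definition bdT n := {c : {set {set 'I_n.+1}} | is_bd_chain c}.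
Definition chT n := {c : {set {set 'I_n.+1}} | is_chain c}.

Inductive El (A : Poset) : Type :=
  mk (n : nat) (c : chT n) (att : bdT n -> El A) (b : chT n -> A).
Arguments mk {A}.

Fixpoint le (A : Poset) (x y : El A) : Prop :=
  match y with mk n c att b =>
    (exists c' : chT n, x = mk n c' att b /\ sval c' \subset sval c) \/
    (exists d : bdT n, sval d \subset sval c /\ le x (att d)) end.

Fixpoint height (A : Poset) (x : El A) : nat :=
  match x with mk n c att b => (\max_(d : bdT n) height (att d)).+1 end.

Lemma height_att A n c att b (d : bdT n) : height (att d) < height (@mk A n c att b).
Proof. by rewrite /= ltnS; apply: (@leq_bigmax _ (fun d => height (att d))). Qed.

Lemma height_mk A n c c' att b : height (@mk A n c att b) = height (mk n c' att b).
Proof. by []. Qed.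

Lemma le_refl A (x : El A) : le x x.
Proof. case: x => n c att b /=; left; exists c; split=> //. Qed.

Lemma le_trans A (x y z : El A) : le x y -> le y z -> le x z.
Proof.
elim: z x y => n c att IH b x y Hxy /= [[c' [E Hc']] | [d [Hd Hyd]]].
- subst y; move: Hxy => /= [[c'' [-> Hc'']] | [d [Hd Hxd]]].
  + left; exists c''; split=> //; exact: subset_trans Hc'' Hc'.
  + right; exists d; split=> //; exact: subset_trans Hd Hc'.
- right; exists d; split=> //. exact: (IH d x y Hxy Hyd).
Qed.

Lemma le_height A (x y : El A) : le x y -> height x <= height y.
Proof.
elim: y x => n c att IH b x /= [[c' [-> _]] | [d [_ H]]].
- by [].
- apply: leq_trans (IH d _ H) _. exact: ltnW (height_att c att b d).
Qed.

Lemma mk_inj A n c att b c' att' b' :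
  @mk A n c att b = mk n c' att' b' -> c = c' /\ att = att' /\ b = b'.
Proof.
move=> E; injection E => Hb Hatt Hc.
have P := inj_pair2_eq_dec nat Nat.eq_dec.
by rewrite (P _ _ _ _ Hb) (P _ _ _ _ Hatt) (P _ _ _ _ Hc).
Qed.

Lemma mk_n A n c att b n' c' att' b' : @mk A n c att b = mk n' c' att' b' -> n = n'.
Proof. by case. Qed.

Definition incell A (k x : El A) : Prop :=
  match k with mk n _ att b => exists c, x = mk n c att b end.

Lemma incell_refl A (k : El A) : incell k k.
Proof. by case: k => n c att b; exists c. Qed.

Lemma incell_trans A (k x y : El A) : incell k x -> incell x y -> incell k y.
Proof. by case: k => n c att b [c1 ->] /= [c2 ->]; exists c2. Qed.

Lemma incell_sym A (k x : El A) : incell k x -> incell x k.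
Proof. by case: k => n c att b [c1 ->] /=; exists c. Qed.

Lemma incell_height A (k x : El A) : incell k x -> height x = height k.
Proof. by case: k => n c att b [c1 ->]. Qed.

Lemma le_eqheight A (x y : El A) : le x y -> height y <= height x -> incell y x.
Proof.
case: y => n c att b /= [[c' [-> _]] | [d [_ H]]] Hh; first by exists c'.
have := le_height H; have := height_att c att b d; move: Hh.
move=> /= Hh h1 h2. have := leq_ltn_trans h2 h1. by rewrite ltnNge Hh.
Qed.

Lemma le_samecell A n c c' att b :
  le (@mk A n c' att b) (mk n c att b) -> sval c' \subset sval c.
Proof.
move=> /= [[c'' [E Hs]] | [d [_ H]]].
- by case: (mk_inj E) => ->.
- have := le_height H; have := height_att c att b d.
  rewrite (height_mk c' c) => h1 h2. have := leq_ltn_trans h2 h1. by rewrite ltnn.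
Qed.

Lemma le_antisym A (x y : El A) : le x y -> le y x -> x = y.
Proof.
move=> Hxy Hyx; have := le_eqheight Hxy (le_height Hyx).
case: y Hxy Hyx => n c att b Hxy Hyx [c' Ex]; subst x.
have h1 := le_samecell Hxy; have h2 := le_samecell Hyx.
have -> : c' = c; last by [].
apply: val_inj => /=; apply/eqP; rewrite eqEsubset h1 h2 //.
Qed.

Definition pE A (x : El A) : A := match x with mk n c att b => b c end.

Fixpoint wf A (x : El A) : Prop := match x with mk n c att b =>
  setT \in sval c /\ (forall d, wf (att d)) /\
  (forall d1 d2 : bdT n, sval d1 \subset sval d2 -> le (att d1) (att d2)) /\
  (forall c1 c2 : chT n, sval c1 \subset sval c2 -> ple (b c1) (b c2)) /\
  (forall d : bdT n, pE (att d) = b (bd_incl n d)) end.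

Lemma pE_mono A (x y : El A) : wf y -> le x y -> ple (pE x) (pE y).
Proof.
elim: y x => n c att IH b x /= [_ [Hw [_ [Hb Hp]]]] [[c' [-> Hc]] | [d [Hd H]]].
- exact: Hb.
- apply: ple_trans (IH d x (Hw d) H) _. rewrite Hp. exact: Hb.
Qed.

Definition subP A (P : El A -> Prop) : Poset.
Proof.
refine {| carrier := {x : El A | P x}; ple := fun x y => le (sval x) (sval y) |}.
- move=> x; exact: le_refl.
- move=> [x px] [y py] /= h1 h2. have E := le_antisym h1 h2. subst y.
  by rewrite (proof_irrelevance _ px py).
- move=> x y z; exact: le_trans.
Defined.

Lemma sig_eq A (P : El A -> Prop) (x y : subP P) : sval x = sval y -> x = y.
Proof.
case: x y => [x px] [y py] /= E; subst y. by rewrite (proof_irrelevance _ px py).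
Qed.

Definition cellraw A n (att : bdT n -> El A) (b : chT n -> A) (c : chT n) : El A :=
  match (insub (sval c) : option (bdT n)) with Some d => att d | None => mk n c att b end.

Definition cellok A n (att : bdT n -> El A) (b : chT n -> A) : Prop :=
  (forall d, wf (att d)) /\
  (forall d1 d2 : bdT n, sval d1 \subset sval d2 -> le (att d1) (att d2)) /\
  (forall c1 c2 : chT n, sval c1 \subset sval c2 -> ple (b c1) (b c2)) /\
  (forall d : bdT n, pE (att d) = b (bd_incl n d)).

Lemma cellraw_bd A n att b (d : bdT n) : @cellraw A n att b (bd_incl n d) = att d.
Proof.
rewrite /cellraw; case: insubP => [d' _ Hv | Hn].
- by congr att; apply: val_inj.
- by move: Hn; rewrite /= (proj2_sig d).
Qed.

Lemma cellraw_new A n att b (c : chT n) : setT \in sval c -> @cellraw A n att b c = mk n c att b.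
Proof.
move=> Hc; rewrite /cellraw; case: insubP => [d' Hd _ | //].
by move: Hd; rewrite /is_bd_chain Hc andbF.
Qed.

Lemma chain_split n (c : chT n) : (exists d : bdT n, c = bd_incl n d) \/ setT \in sval c.
Proof.
case H: (setT \in sval c); [by right | left].
have Hb : is_bd_chain (sval c) by rewrite /is_bd_chain (proj2_sig c) H.
exists (exist _ (sval c) Hb); exact: val_inj.
Qed.

Lemma cellraw_wf A n att b (ok : @cellok A n att b) c : wf (cellraw att b c).
Proof.
case: (chain_split c) => [[d ->] | Hc].
- rewrite cellraw_bd; exact: ok.1.
- rewrite cellraw_new //=; split=> //.
Qed.

Lemma cellraw_mono A n att b (ok : @cellok A n att b) (c1 c2 : chT n) :
  sval c1 \subset sval c2 -> le (cellraw att b c1) (cellraw att b c2).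
Proof.
case: ok => [Hw [Hm [Hb Hp]]].
case: (chain_split c1) => [[d1 ->] | H1]; case: (chain_split c2) => [[d2 ->] | H2] Hs.
- rewrite !cellraw_bd; exact: Hm.
- rewrite cellraw_bd cellraw_new //=; right; exists d1; split=> //; exact: le_refl.
- exfalso; have := subsetP Hs _ H1; rewrite /= => H.
  by move: (proj2_sig d2); rewrite /is_bd_chain H andbF.
- rewrite !cellraw_new //=; left; exists c1; split=> //.
Qed.

Lemma pE_cellraw A n att b (ok : @cellok A n att b) c : pE (cellraw att b c) = b c.
Proof.
case: (chain_split c) => [[d ->] | Hc].
- rewrite cellraw_bd; exact: ok.2.2.2.
- by rewrite cellraw_new.
Qed.

Definition Epos A := subP (@wf A).

Definition pmap A : Mono (Epos A) A.
Proof.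
refine (@Build_Mono (Epos A) A (fun x => pE (sval x)) _).
move=> x y H; exact: pE_mono (proj2_sig y) H.
Defined.

Lemma pmap_trivfib A : trivial_fibration (pmap A).
Proof.
move=> n a bb Hab.
have ok : cellok (fun d => sval (a d)) (fun c => bb c).
  split; first by move=> d; exact: proj2_sig (a d).
  split; first by move=> d1 d2 H; exact: (mmono a H).
  split; first by move=> c1 c2 H; exact: (mmono bb H).
  by move=> d; exact: Hab d.
pose h := @Build_Mono (PiSd2Delta n) (Epos A)
  (fun c => exist _ (cellraw _ _ c) (cellraw_wf ok c) : Epos A) (fun c1 c2 H => cellraw_mono ok H).
exists h; split.
- by move=> d; apply: sig_eq; rewrite /= cellraw_bd.
- by move=> c; rewrite /= pE_cellraw.
Qed.

Inductive Cellular : Poset -> Prop :=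
| cel0 (Z : Poset) : (Z -> False) -> Cellular Z
| celS n (X Y : Poset) (f : Mono (PiSd2bdDelta n) X) (j : Mono (PiSd2Delta n) Y) (g : Mono X Y) :
   Cellular X -> is_pushout (bd_incl n) f j g -> Cellular Y.

Lemma cell_noretract (A : Poset) : inhabited A ->
  (forall (n : nat) (X Y : Poset) (f : Mono (PiSd2bdDelta n) X)
          (j : Mono (PiSd2Delta n) Y) (g : Mono X Y),
      is_pushout (bd_incl n) f j g -> retract_of A Y -> retract_of A X) ->
  forall Z, Cellular Z -> ~ retract_of A Z.
Proof.
move=> [a0] H Z; elim=> [Z0 HZ | n X Y f j g _ IH Hp] Hr.
- case: Hr => s [r _]; exact: HZ (s a0).
- exact: IH (H _ _ _ _ _ _ Hp Hr).
Qed.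

Definition inZ A (S : list (El A)) (x : El A) : Prop :=
  exists k, List.In k S /\ incell k x.

Definition ZP A (S : list (El A)) := subP (fun x => wf x /\ inZ S x).

Definition closedS A (S : list (El A)) : Prop :=
  forall k, List.In k S -> wf k /\ match k with mk n _ att _ => forall d, inZ S (att d) end.

Lemma maxh A (S : list (El A)) : S <> nil ->
  exists k, List.In k S /\ forall k', List.In k' S -> height k' <= height k.
Proof.
elim: S => [//|x S IH] _.
case: S IH => [|y S] IH.
- by exists x; split; [left | move=> k' [<-|[]]].
- have [k [Hk Hm]] := IH (fun E => ltac:(discriminate)).
  case: (leqP (height x) (height k)) => Hx.
  + exists k; split; first by right.
    by move=> k' [<-|Hk']; [| exact: Hm].
  + exists x; split; first by left.
    move=> k' [<-|Hk']; first by [].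
    exact: leq_trans (Hm _ Hk') (ltnW Hx).
Qed.

Definition decb (P : Prop) : bool := if excluded_middle_informative P then true else false.
Lemma decbP (P : Prop) : decb P = true <-> P.
Proof. by rewrite /decb; case: excluded_middle_informative. Qed.

Lemma filter_len A (f : A -> bool) (S : list A) k :
  List.In k S -> f k = false -> (length (List.filter f S) < length S)%coq_nat.
Proof.
elim: S => [//|x S IH] /= [->|H] Hf.
- rewrite Hf. have := List.filter_length_le f S. lia.
- case: (f x) => /=; have := IH H Hf; lia.
Qed.

Lemma push_step A (S : list (El A)) n c0 att b
  (HkS : List.In (mk n c0 att b) S)
  (Hmax : forall k', List.In k' S -> height k' <= height (mk n c0 att b))
  (Hcl : closedS S) :
  exists (f : Mono (PiSd2bdDelta n) (ZP (List.filter (fun k' => ~~ decb (incell (mk n c0 att b) k')) S)))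
         (j : Mono (PiSd2Delta n) (ZP S)) g, is_pushout (bd_incl n) f j g.
Proof.
set K := mk n c0 att b.
set S' := List.filter _ S.
have [HwK HclK] := Hcl K HkS.
have ok : cellok att b by case: HwK => _ H.
case: (ok) => [Hw [Hm [Hb Hp]]].
have hinS : forall y, inZ S' y -> inZ S y.
  move=> y [k [Hk Hy]]; exists k; split=> //. by case/List.filter_In: Hk.
have hinS' : forall y, inZ S y -> ~ incell K y -> inZ S' y.
  move=> y [k [Hk Hy]] Hn; exists k; split=> //; apply/List.filter_In; split=> //.
  apply/negP => /decbP HK; apply: Hn; exact: incell_trans HK Hy.
have hnot : forall y, inZ S' y -> ~ incell K y.
  move=> y [k [Hk Hy]] HK; case/List.filter_In: Hk => _ /negP; apply; apply/decbP.
  exact: incell_trans HK (incell_sym Hy).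
have hheight : forall y, inZ S y -> height y <= height K.
  by move=> y [k [Hk Hy]]; rewrite (incell_height Hy); exact: Hmax.
have hatt : forall d, ~ incell K (att d).
  move=> d /incell_height H; have := height_att c0 att b d; by rewrite H ltnn.
have hattZ : forall d, inZ S' (att d) by move=> d; apply: hinS'; [exact: HclK | exact: hatt].
pose f := @Build_Mono (PiSd2bdDelta n) (ZP S')
  (fun d => exist _ (att d) (conj (Hw d) (hattZ d)) : ZP S') (fun d1 d2 H => Hm d1 d2 H).
have hj : forall c, inZ S (cellraw att b c).
  move=> c; case: (chain_split c) => [[d ->] | Hc].
  - rewrite cellraw_bd; exact: HclK.
  - rewrite cellraw_new //; exists K; split=> //; by exists c.
pose j := @Build_Mono (PiSd2Delta n) (ZP S)
  (fun c => exist _ (cellraw att b c) (conj (cellraw_wf ok c) (hj c)) : ZP S)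
  (fun c1 c2 H => cellraw_mono ok H).
pose g := @Build_Mono (ZP S') (ZP S)
  (fun x => exist _ (sval x) (conj (proj2_sig x).1 (hinS _ (proj2_sig x).2)) : ZP S)
  (fun x y H => H).
exists f, j, g; split.
  by move=> d; apply: sig_eq; rewrite /= cellraw_bd.
move=> W a bb Hab.
pose u0 (x : ZP S) : W :=
  match excluded_middle_informative (incell K (sval x)) with
  | left H => bb (proj1_sig (constructive_indefinite_description _ H))
  | right H => a (exist _ (sval x) (conj (proj2_sig x).1 (hinS' _ (proj2_sig x).2 H)) : ZP S')
  end.
have u_spec1 : forall (x : ZP S) c, sval x = mk n c att b -> u0 x = bb c.
  move=> x c E; rewrite /u0; case: excluded_middle_informative => [H|H].
  - case: constructive_indefinite_description => c' /= E'.
    by rewrite E in E'; case: (mk_inj E') => ->.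
  - by exfalso; apply: H; rewrite E; exists c.
have u_spec2 : forall (x : ZP S) (y : ZP S'), sval x = sval y -> u0 x = a y.
  move=> x y E; rewrite /u0; case: excluded_middle_informative => [H|H].
  - by exfalso; apply: (hnot _ (proj2_sig y).2); rewrite -E.
  - by congr (a _); apply: sig_eq.
have u_mono : forall x y : ZP S, ple x y -> ple (u0 x) (u0 y).
  move=> x y Hxy.
  case: (excluded_middle_informative (incell K (sval x))) => Hx;
  case: (excluded_middle_informative (incell K (sval y))) => Hy.
  - case: Hx => c1 E1; case: Hy => c2 E2.
    rewrite (u_spec1 _ _ E1) (u_spec1 _ _ E2); apply: (mmono bb).
    apply: (@le_samecell A n c2 c1 att b); rewrite -E1 -E2; exact: Hxy.
  - exfalso; apply: Hy.
    have H1 : height (sval y) <= height (sval x).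
      rewrite (incell_height Hx); exact: hheight (proj2_sig y).2.
    exact: incell_trans Hx (incell_sym (le_eqheight Hxy H1)).
  - case: Hy => c2 E2; rewrite (u_spec1 _ _ E2).
    have Hxy' : le (sval x) (mk n c2 att b) by rewrite -E2; exact: Hxy.
    case: Hxy' => [[c' [E' _]] | [d [Hd Hle]]].
      by exfalso; apply: Hx; rewrite E'; exists c'.
    pose x' := (exist _ (sval x) (conj (proj2_sig x).1 (hinS' _ (proj2_sig x).2 Hx)) : ZP S').
    rewrite (u_spec2 x x') //.
    apply: ple_trans (mmono a (_ : ple x' (f d))) _; first exact: Hle.
    have -> : a (f d) = bb (bd_incl n d) by exact: Hab d.
    apply: (mmono bb); exact: Hd.
  - pose x' := (exist _ (sval x) (conj (proj2_sig x).1 (hinS' _ (proj2_sig x).2 Hx)) : ZP S').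
    pose y' := (exist _ (sval y) (conj (proj2_sig y).1 (hinS' _ (proj2_sig y).2 Hy)) : ZP S').
    rewrite (u_spec2 x x') // (u_spec2 y y') //; exact: (mmono a).
pose u := @Build_Mono (ZP S) W u0 u_mono.
exists u; split; [|split].
- by move=> x; rewrite /= (u_spec2 _ x).
- move=> c /=; case: (chain_split c) => [[d ->] | Hc].
  + rewrite (u_spec2 _ (f d)); last by rewrite /= cellraw_bd.
    exact: Hab d.
  + by apply: u_spec1; rewrite /= cellraw_new.
- move=> u' H1 H2 x.
  case: (excluded_middle_informative (incell K (sval x))) => Hx.
  + case: Hx => c E.
    have Hc : setT \in sval c by move: (proj2_sig x).1; rewrite E; case.
    have -> : x = j c by apply: sig_eq; rewrite /= cellraw_new.
    transitivity (bb c); first exact: H2 c. symmetry; apply: u_spec1; by rewrite /= cellraw_new.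
  + pose x' := (exist _ (sval x) (conj (proj2_sig x).1 (hinS' _ (proj2_sig x).2 Hx)) : ZP S').
    have -> : x = g x' by apply: sig_eq.
    transitivity (a x'); first exact: H1 x'. symmetry; exact: u_spec2.
Qed.

Lemma cellular_ZP A : forall m (S : list (El A)), (length S <= m)%coq_nat -> closedS S -> Cellular (ZP S).
Proof.
elim=> [|m IH] S Hl Hcl.
- case: S Hl Hcl => [|? ?] /= Hl Hcl; last lia.
  apply: cel0 => -[x [_ [k [[] _]]]].
- case: S Hl Hcl => [|k0 S0] Hl Hcl.
    by apply: cel0 => -[x [_ [k [[] _]]]].
  set S := k0 :: S0.
  have [k [Hk Hmax]] := maxh (S := S) ltac:(discriminate).
  case: k Hk Hmax => n c0 att b Hk Hmax.
  set K := mk n c0 att b.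
  have [f [j [g Hp]]] := push_step Hk Hmax Hcl.
  apply: celS Hp; apply: IH.
  - have := filter_len (f := fun k' => ~~ decb (incell K k')) Hk.
    rewrite (proj2 (decbP _) (incell_refl K)) => /(_ erefl). rewrite /S /= in Hl *; lia.
  - move=> k' /List.filter_In [Hk' Hn]; have [Hw Hc] := Hcl k' Hk'; split=> //.
    case: k' Hk' Hn Hw Hc => n' c' att' b' Hk' Hn Hw Hc d.
    have [k'' [Hk'' Hi]] := Hc d.
    exists k''; split=> //; apply/List.filter_In; split=> //.
    apply/negP => /decbP HK.
    have h1 := height_att c' att' b' d.
    rewrite (incell_height Hi) (incell_height HK) in h1.
    have := Hmax _ Hk'; rewrite leqNgt h1 //.
Qed.

Fixpoint supp A (x : El A) : list (El A) :=
  match x with mk n c att b => x :: List.flat_map (fun d => supp (att d)) (index_enum (bdT n)) end.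

Lemma in_In (T : eqType) (x : T) s : x \in s -> List.In x s.
Proof.
elim: s => //= y s IH; rewrite in_cons => /orP [/eqP ->|H]; first by left.
by right; exact: IH.
Qed.

Lemma supp_self A (x : El A) : List.In x (supp x).
Proof. by case: x; left. Qed.

Lemma supp_sub A n c att b (d : bdT n) y :
  List.In y (supp (att d)) -> List.In y (supp (@mk A n c att b)).
Proof.
move=> H; right; apply/List.in_flat_map; exists d; split=> //.
apply: in_In; exact: mem_index_enum.
Qed.

Lemma supp_closed A (x : El A) n' c' att' b' :
  List.In (mk n' c' att' b') (supp x) -> forall d, List.In (att' d) (supp x).
Proof.
elim: x => n c att IH b /= [E | /List.in_flat_map [d' [_ H]]] d.
- have En := mk_n E; subst n'; case: (mk_inj E) => _ [<- _].
  apply: (@supp_sub A n c att b d); exact: supp_self.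
- apply: (@supp_sub A n c att b d'); exact: IH H d.
Qed.

Lemma supp_wf A (x k : El A) : wf x -> List.In k (supp x) -> wf k.
Proof.
elim: x => n c att IH b Hw Hk.
have [E|Hk'] : mk n c att b = k \/ List.In k (List.flat_map (fun d => supp (att d)) (index_enum (bdT n))) := Hk.
  by rewrite -E.
have [d' [_ H]] := proj1 (List.in_flat_map _ _ _) Hk'.
apply: (IH d' _ H); case: Hw => _ [H' _]; exact: H'.
Qed.

Theorem lemma6p1 (A : Poset) :
  finite_poset A -> inhabited A ->
  (forall (n : nat) (X Y : Poset) (f : Mono (PiSd2bdDelta n) X)
          (j : Mono (PiSd2Delta n) Y) (g : Mono X Y),
      is_pushout (bd_incl n) f j g -> retract_of A Y -> retract_of A X) ->
  ~ cofibrant A.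
Proof.
move=> [l Hl] HA H Hcof.
have [s Hs] := Hcof _ _ _ (@pmap_trivfib A) (mid A).
pose S0 := List.flat_map (fun a => supp (sval (s a))) l.
have Hcl : closedS S0.
  move=> k /List.in_flat_map [a [_ Hk]]; split.
    exact: supp_wf (proj2_sig (s a)) Hk.
  case: k Hk => n c att b Hk d; exists (att d); split; last exact: incell_refl.
  apply/List.in_flat_map; exists a; split=> //; exact: supp_closed Hk d.
have Hcel := cellular_ZP (le_n _) Hcl.
apply: (cell_noretract HA H Hcel).
have hin : forall a, inZ S0 (sval (s a)).
  move=> a; exists (sval (s a)); split; last exact: incell_refl.
  apply/List.in_flat_map; exists a; split=> //; exact: supp_self.
pose s' := @Build_Mono A (ZP S0) (fun a => exist _ (sval (s a)) (conj (proj2_sig (s a)) (hin a)) : ZP S0)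
  (fun x y Hxy => mmono s Hxy).
pose r := @Build_Mono (ZP S0) A (fun x => pE (sval x)) (fun x y Hxy => pE_mono (proj2_sig y).1 Hxy).
by exists s', r => a; exact: Hs a.
Qed.
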